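(* Let $K$ be a field of characteristic $0$, let $L=\mathcal{L}(x,y)$ be the free Lie algebra over $K$ freely generated by $x,y$, let $\delta$ be the derivation of $L$ with $\delta(x)=0$, $\delta(y)=x$, and $L^\delta=\ker\delta$. If $f\in L^\delta$ has degree $6$, then $f$ belongs to the Lie subalgebra of $L$ generated by $x$, $[y,x]$ and $[y,x,y,[y,x,x]]$.
   Context: Brackets are left-normed: $[a_1,a_2,\ldots,a_n]=[[\ldots[a_1,a_2],\ldots],a_n]$; thus $[y,x,y,[y,x,x]]=[[[y,x],y],[[y,x],x]]$. *)

(* Defs.v *)
From HB Require Import structures.
From mathcomp Require Import all_boot all_order all_algebra.
Set Implicit Arguments. Unset Strict Implicit. Unset Printing Implicit Defensive.
Import Order.TTheory GRing.Theory Num.Theory.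
Local Open Scope ring_scope.

(* Noncommutative formal power series over K in the two letters
   x := false, y := true.
   The free associative algebra K<x,y> sits inside it, and the free Lie
   algebra L(x,y) is realized (as usual) as the Lie subalgebra generated by
   x and y for the commutator bracket. *)
Definition ncs (K : fieldType) := seq bool -> K.

Section NCS.
Variable K : fieldType.

Definition ncs_add (p q : ncs K) : ncs K := fun w => p w + q w.
Definition ncs_scale (a : K) (p : ncs K) : ncs K := fun w => a * p w.
Definition ncs_mul (p q : ncs K) : ncs K :=
  fun w => \sum_(i < (size w).+1) p (take i w) * q (drop i w).
Definition ncs_br (p q : ncs K) : ncs K :=
  fun w => ncs_mul p q w - ncs_mul q p w.

Definition ncs_x : ncs K := fun w => if w == [:: false] then 1 else 0.
Definition ncs_y : ncs K := fun w => if w == [:: true] then 1 else 0.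

Inductive lie_closure (S : ncs K -> Prop) : ncs K -> Prop :=
  | lc_gen p : S p -> lie_closure S p
  | lc_add p q : lie_closure S p -> lie_closure S q -> lie_closure S (ncs_add p q)
  | lc_scale a p : lie_closure S p -> lie_closure S (ncs_scale a p)
  | lc_br p q : lie_closure S p -> lie_closure S q -> lie_closure S (ncs_br p q).

Definition free_lie (f : ncs K) : Prop :=
  lie_closure (fun p => p = ncs_x \/ p = ncs_y) f.

Definition homog (n : nat) (f : ncs K) : Prop := forall w, size w != n -> f w = 0.

(* d is a derivation of the Lie algebra L (values outside L are irrelevant) *)
Definition lie_derivation (d : ncs K -> ncs K) : Prop :=
  (forall p q, free_lie p -> free_lie q -> d (ncs_add p q) = ncs_add (d p) (d q)) /\
  (forall a p, free_lie p -> d (ncs_scale a p) = ncs_scale a (d p)) /\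
  (forall p q, free_lie p -> free_lie q ->
     d (ncs_br p q) = ncs_add (ncs_br (d p) q) (ncs_br p (d q))).

Definition ncs_zero : ncs K := fun _ => 0.
End NCS.

(* Main.v *)
Require Import Defs.
From HB Require Import structures.
From mathcomp Require Import all_boot all_order all_algebra.
From Stdlib Require Import FunctionalExtensionality.
From mathcomp Require Import zify ring.
Set Implicit Arguments. Unset Strict Implicit. Unset Printing Implicit Defensive.
Import Order.TTheory GRing.Theory Num.Theory.
Local Open Scope ring_scope.

Inductive tm := TX | TY | TB of tm & tm.
Fixpoint deg (t : tm) : nat := match t with TX | TY => 1%N | TB a b => (deg a + deg b)%N end.
Definition isum (n : nat) (F : nat -> int) : int := foldr (fun i acc => F i + acc) 0 (iota 0 n).
Fixpoint cZ (t : tm) (w : seq bool) : int :=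
  match t with
  | TX => if w == [:: false] then 1 else 0
  | TY => if w == [:: true] then 1 else 0
  | TB a b => if size w == (deg a + deg b)%N then
      isum (size w).+1 (fun i => cZ a (take i w) * cZ b (drop i w) - cZ b (take i w) * cZ a (drop i w))
      else 0
  end.
Fixpoint words (n : nat) : seq (seq bool) :=
  if n is n'.+1 then [seq b :: w | b <- [:: false; true], w <- words n'] else [:: [::]].
Definition lcZ (cs : seq int) (l : seq tm) (w : seq bool) : int :=
  foldr (fun i acc => nth 0 cs i * cZ (nth TX l i) w + acc) 0 (iota 0 (size l)).
Fixpoint dT (t : tm) : seq (int * tm) :=
  match t with
  | TX => [::]
  | TY => [:: (1, TX)]
  | TB a b => [seq (p.1, TB p.2 b) | p <- dT a] ++ [seq (p.1, TB a p.2) | p <- dT b]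
  end.
Definition lpZ (ps : seq (int * tm)) (w : seq bool) : int :=
  foldr (fun p acc => p.1 * cZ p.2 w + acc) 0 ps.
Definition Btab : seq (seq tm) := [:: [:: TX; TY]; [:: (TB TX TY)]; [:: (TB TX (TB TX TY)); (TB (TB TX TY) TY)]; [:: (TB TX (TB TX (TB TX TY))); (TB TX (TB (TB TX TY) TY)); (TB (TB (TB TX TY) TY) TY)]; [:: (TB TX (TB TX (TB TX (TB TX TY)))); (TB TX (TB TX (TB (TB TX TY) TY))); (TB (TB TX (TB TX TY)) (TB TX TY)); (TB TX (TB (TB (TB TX TY) TY) TY)); (TB (TB TX TY) (TB (TB TX TY) TY)); (TB (TB (TB (TB TX TY) TY) TY) TY)]; [:: (TB (TB (TB (TB (TB TY TX) TX) TX) TX) TX); (TB (TB (TB (TB TY TX) TX) TX) (TB TY TX)); (TB (TB (TB TY TX) TY) (TB (TB TY TX) TX)); (TB TX (TB TX (TB TX (TB (TB TX TY) TY)))); (TB TX (TB TX (TB (TB (TB TX TY) TY) TY))); (TB TX (TB (TB TX TY) (TB (TB TX TY) TY))); (TB TX (TB (TB (TB (TB TX TY) TY) TY) TY)); (TB (TB TX TY) (TB (TB (TB TX TY) TY) TY)); (TB (TB (TB (TB (TB TX TY) TY) TY) TY) TY)]].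
Definition brtab : seq (seq (seq (seq (seq int)))) := [:: [:: [:: [:: [:: (Posz 0)]; [:: (Posz 1)]]; [:: [:: (Negz 0)]; [:: (Posz 0)]]]; [:: [:: [:: (Posz 1); (Posz 0)]]; [:: [:: (Posz 0); (Negz 0)]]]; [:: [:: [:: (Posz 1); (Posz 0); (Posz 0)]; [:: (Posz 0); (Posz 1); (Posz 0)]]; [:: [:: (Posz 0); (Negz 0); (Posz 0)]; [:: (Posz 0); (Posz 0); (Negz 0)]]]; [:: [:: [:: (Posz 1); (Posz 0); (Posz 0); (Posz 0); (Posz 0); (Posz 0)]; [:: (Posz 0); (Posz 1); (Posz 0); (Posz 0); (Posz 0); (Posz 0)]; [:: (Posz 0); (Posz 0); (Posz 0); (Posz 1); (Posz 0); (Posz 0)]]; [:: [:: (Posz 0); (Negz 0); (Posz 1); (Posz 0); (Posz 0); (Posz 0)]; [:: (Posz 0); (Posz 0); (Posz 0); (Negz 0); (Negz 0); (Posz 0)]; [:: (Posz 0); (Posz 0); (Posz 0); (Posz 0); (Posz 0); (Negz 0)]]]; [:: [:: [:: (Negz 0); (Posz 0); (Posz 0); (Posz 0); (Posz 0); (Posz 0); (Posz 0); (Posz 0); (Posz 0)]; [:: (Posz 0); (Posz 0); (Posz 0); (Posz 1); (Posz 0); (Posz 0); (Posz 0); (Posz 0); (Posz 0)]; [:: (Posz 0); (Posz 1); (Posz 0); (Posz 0); (Posz 0); (Posz 0); (Posz 0); (Posz 0); (Posz 0)]; [:: (Posz 0); (Posz 0); (Posz 0); (Posz 0); (Posz 1);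 (Posz 0); (Posz 0); (Posz 0); (Posz 0)]; [:: (Posz 0); (Posz 0); (Posz 0); (Posz 0); (Posz 0); (Posz 1); (Posz 0); (Posz 0); (Posz 0)]; [:: (Posz 0); (Posz 0); (Posz 0); (Posz 0); (Posz 0); (Posz 0); (Posz 1); (Posz 0); (Posz 0)]]; [:: [:: (Posz 0); (Posz 2); (Posz 0); (Negz 0); (Posz 0); (Posz 0); (Posz 0); (Posz 0); (Posz 0)]; [:: (Posz 0); (Posz 0); (Posz 1); (Posz 0); (Negz 0); (Negz 1); (Posz 0); (Posz 0); (Posz 0)]; [:: (Posz 0); (Posz 0); (Negz 1); (Posz 0); (Posz 0); (Posz 1); (Posz 0); (Posz 0); (Posz 0)]; [:: (Posz 0); (Posz 0); (Posz 0); (Posz 0); (Posz 0); (Posz 0); (Negz 0); (Negz 0); (Posz 0)]; [:: (Posz 0); (Posz 0); (Posz 0); (Posz 0); (Posz 0); (Posz 0); (Posz 0); (Negz 0); (Posz 0)]; [:: (Posz 0); (Posz 0); (Posz 0); (Posz 0); (Posz 0); (Posz 0); (Posz 0); (Posz 0); (Negz 0)]]]]; [:: [:: [:: [:: (Negz 0); (Posz 0)]; [:: (Posz 0); (Posz 1)]]]; [:: [:: [:: (Posz 0); (Posz 0); (Posz 0)]]]; [:: [:: [:: (Posz 0); (Posz 0); (Negz 0); (Posz 0); (Posz 0); (Posz 0)]; [:: (Posz 0); (Posz 0); (Posz 0); (Posz 0); (Posz 1); (Posz 0)]]]; [:: [:: [:: (Posz 0); (Negz 0); (Posz 0); (Posz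 0); (Posz 0); (Posz 0); (Posz 0); (Posz 0); (Posz 0)]; [:: (Posz 0); (Posz 0); (Negz 0); (Posz 0); (Posz 0); (Posz 1); (Posz 0); (Posz 0); (Posz 0)]; [:: (Posz 0); (Posz 0); (Posz 0); (Posz 0); (Posz 0); (Posz 0); (Posz 0); (Posz 1); (Posz 0)]]]]; [:: [:: [:: [:: (Negz 0); (Posz 0); (Posz 0)]; [:: (Posz 0); (Posz 1); (Posz 0)]]; [:: [:: (Posz 0); (Negz 0); (Posz 0)]; [:: (Posz 0); (Posz 0); (Posz 1)]]]; [:: [:: [:: (Posz 0); (Posz 0); (Posz 1); (Posz 0); (Posz 0); (Posz 0)]]; [:: [:: (Posz 0); (Posz 0); (Posz 0); (Posz 0); (Negz 0); (Posz 0)]]]; [:: [:: [:: (Posz 0); (Posz 0); (Posz 0); (Posz 0); (Posz 0); (Posz 0); (Posz 0); (Posz 0); (Posz 0)]; [:: (Posz 0); (Posz 0); (Posz 1); (Posz 0); (Posz 0); (Posz 0); (Posz 0); (Posz 0); (Posz 0)]]; [:: [:: (Posz 0); (Posz 0); (Negz 0); (Posz 0); (Posz 0); (Posz 0); (Posz 0); (Posz 0); (Posz 0)]; [:: (Posz 0); (Posz 0); (Posz 0); (Posz 0); (Posz 0); (Posz 0); (Posz 0); (Posz 0); (Posz 0)]]]]; [:: [:: [:: [:: (Negz 0); (Posz 0); (Posz 0); (Posz 0); (Posz 0); (Posz 0)]; [:: (Posz 0); (Posz 1); (Negz 0); (Posz 0); (Posz 0); (Posz 0)]]; [:: [:: (Posz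 0); (Negz 0); (Posz 0); (Posz 0); (Posz 0); (Posz 0)]; [:: (Posz 0); (Posz 0); (Posz 0); (Posz 1); (Posz 1); (Posz 0)]]; [:: [:: (Posz 0); (Posz 0); (Posz 0); (Negz 0); (Posz 0); (Posz 0)]; [:: (Posz 0); (Posz 0); (Posz 0); (Posz 0); (Posz 0); (Posz 1)]]]; [:: [:: [:: (Posz 0); (Posz 1); (Posz 0); (Posz 0); (Posz 0); (Posz 0); (Posz 0); (Posz 0); (Posz 0)]]; [:: [:: (Posz 0); (Posz 0); (Posz 1); (Posz 0); (Posz 0); (Negz 0); (Posz 0); (Posz 0); (Posz 0)]]; [:: [:: (Posz 0); (Posz 0); (Posz 0); (Posz 0); (Posz 0); (Posz 0); (Posz 0); (Negz 0); (Posz 0)]]]]; [:: [:: [:: [:: (Posz 1); (Posz 0); (Posz 0); (Posz 0); (Posz 0); (Posz 0); (Posz 0); (Posz 0); (Posz 0)]; [:: (Posz 0); (Negz 1); (Posz 0); (Posz 1); (Posz 0); (Posz 0); (Posz 0); (Posz 0); (Posz 0)]]; [:: [:: (Posz 0); (Posz 0); (Posz 0); (Negz 0); (Posz 0); (Posz 0); (Posz 0); (Posz 0); (Posz 0)]; [:: (Posz 0); (Posz 0); (Negz 0); (Posz 0); (Posz 1); (Posz 2); (Posz 0); (Posz 0); (Posz 0)]]; [:: [:: (Posz 0); (Negz 0); (Posz 0); (Posz 0); (Posz 0); (Posz 0); (Posz 0); (Posz 0); (Posz 0)]; [:: (Posz 0); (Posz 0); (Posz 2); (Posz 0); (Posz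 0); (Negz 0); (Posz 0); (Posz 0); (Posz 0)]]; [:: [:: (Posz 0); (Posz 0); (Posz 0); (Posz 0); (Negz 0); (Posz 0); (Posz 0); (Posz 0); (Posz 0)]; [:: (Posz 0); (Posz 0); (Posz 0); (Posz 0); (Posz 0); (Posz 0); (Posz 1); (Posz 1); (Posz 0)]]; [:: [:: (Posz 0); (Posz 0); (Posz 0); (Posz 0); (Posz 0); (Negz 0); (Posz 0); (Posz 0); (Posz 0)]; [:: (Posz 0); (Posz 0); (Posz 0); (Posz 0); (Posz 0); (Posz 0); (Posz 0); (Posz 1); (Posz 0)]]; [:: [:: (Posz 0); (Posz 0); (Posz 0); (Posz 0); (Posz 0); (Posz 0); (Negz 0); (Posz 0); (Posz 0)]; [:: (Posz 0); (Posz 0); (Posz 0); (Posz 0); (Posz 0); (Posz 0); (Posz 0); (Posz 0); (Posz 1)]]]]].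
Definition chosenw : seq (seq bool) := [:: [:: false; false; false; false; false; true]; [:: false; false; false; false; true; true]; [:: false; false; false; true; false; true]; [:: false; false; false; true; true; true]; [:: false; false; true; true; false; true]; [:: false; false; true; true; true; true]].
Definition lamtab : seq (int * seq int) := [:: ((Posz 1), [:: (Negz 0); (Posz 0); (Posz 0); (Posz 0); (Posz 0); (Posz 0)]); ((Posz 2), [:: (Posz 0); (Negz 0); (Posz 0); (Posz 0); (Posz 0); (Posz 0)]); ((Posz 1), [:: (Posz 0); (Posz 2); (Posz 1); (Posz 0); (Posz 0); (Posz 0)]); ((Posz 3), [:: (Posz 0); (Posz 0); (Posz 0); (Negz 0); (Posz 0); (Posz 0)]); ((Posz 2), [:: (Posz 0); (Posz 0); (Posz 0); (Negz 0); (Posz 1); (Posz 0)]); ((Posz 4), [:: (Posz 0); (Posz 0); (Posz 0); (Posz 0); (Posz 0); (Negz 0)])].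
Definition Bn (n : nat) : seq tm := if n is n'.+1 then nth [::] Btab n' else [::].
Definition brdat (i j a b : nat) : seq int :=
  nth [::] (nth [::] (nth [::] (nth [::] brtab i.-1) j.-1) a) b.
Definition brcheck : bool :=
  all (fun i => all (fun j => all (fun a => all (fun b =>
     true &&
     all (fun w => cZ (TB (nth TX (Bn i) a) (nth TX (Bn j) b)) w == lcZ (brdat i j a b) (Bn (i + j)) w)
       (words (i + j)))
   (iota 0 (size (Bn j)))) (iota 0 (size (Bn i)))) (iota 1 (6 - i))) (iota 1 5).
Definition degcheck : bool := all (fun n => all (fun t => deg t == n) (Bn n)) (iota 1 6).
Definition Mrow (e i : nat) : int := lpZ (dT (nth TX (Bn 6) i)) (nth [::] chosenw e).
Definition lamcheck : bool :=
  all (fun k => let: (N, lam) := nth (0, [::]) lamtab (k - 3) in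
     (N != 0) && (size lam == 6%N) &&
     all (fun i => N * (i == k)%:R == isum 6 (fun e => nth 0 lam e * Mrow e i)) (iota 0 9)) (iota 3 6).
Lemma brcheckP : brcheck. Proof. vm_compute. reflexivity. Qed.
Lemma degcheckP : degcheck. Proof. vm_compute. reflexivity. Qed.
Lemma lamcheckP : lamcheck. Proof. vm_compute. reflexivity. Qed.

Lemma isumE n F : isum n F = \sum_(i < n) F i.
Proof.
rewrite /isum -(big_mkord xpredT F) /index_iota subn0.
by rewrite unlock.
Qed.

Lemma cZ_homog t w : size w != deg t -> cZ t w = 0.
Proof.
case: t => [||a b] /=.
- by move=> h; case: ifP => // /eqP hw; rewrite hw in h.
- by move=> h; case: ifP => // /eqP hw; rewrite hw in h.
- by move/negbTE->.
Qed.

Lemma cZ_prod0 a b w i : size w != (deg a + deg b)%N -> (i <= size w)%N ->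
  cZ a (take i w) * cZ b (drop i w) = 0.
Proof.
move=> hw hi.
have [ha|ha] := eqVneq (size (take i w)) (deg a); last by rewrite cZ_homog ?mul0r.
rewrite (@cZ_homog b) ?mulr0 // size_drop.
move: ha; rewrite size_takel // => ha.
apply/eqP => hb; move/eqP: hw; apply; lia.
Qed.

Section Th.
Variable K : fieldType.

Fixpoint evalK (t : tm) : ncs K :=
  match t with TX => ncs_x K | TY => ncs_y K | TB a b => ncs_br (evalK a) (evalK b) end.

Lemma intr_sum (I : Type) (r : seq I) (F : I -> int) :
  ((\sum_(i <- r) F i)%:~R : K) = \sum_(i <- r) (F i)%:~R.
Proof. elim: r => [|a r ih]; by rewrite ?big_nil ?big_cons ?intrD ?ih. Qed.

Lemma evalK_cZ t w : evalK t w = (cZ t w)%:~R.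
Proof.
elim: t w => [w|w|a iha b ihb w] /=.
- by rewrite /ncs_x; case: eqP.
- by rewrite /ncs_y; case: eqP.
rewrite /ncs_br /ncs_mul.
under eq_bigr => i _ do rewrite iha ihb -intrM.
under [X in _ - X]eq_bigr => i _ do rewrite iha ihb -intrM.
rewrite -!intr_sum -intrB -sumrB.
case: ifP => h; first by rewrite isumE.
rewrite big1 // => i _.
rewrite cZ_prod0 ?h // ?(@cZ_prod0 b a) ?subrr //; last by rewrite -ltnS.
  by rewrite addnC h.
by rewrite -ltnS.
Qed.

Lemma mul_addl (p p' q : ncs K) w : ncs_mul (ncs_add p p') q w = ncs_mul p q w + ncs_mul p' q w.
Proof. by rewrite /ncs_mul -big_split; apply: eq_bigr => i _; rewrite /ncs_add mulrDl. Qed.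
Lemma mul_addr (p p' q : ncs K) w : ncs_mul q (ncs_add p p') w = ncs_mul q p w + ncs_mul q p' w.
Proof. by rewrite /ncs_mul -big_split; apply: eq_bigr => i _; rewrite /ncs_add mulrDr. Qed.
Lemma mul_scalel a (p q : ncs K) w : ncs_mul (ncs_scale a p) q w = a * ncs_mul p q w.
Proof. by rewrite /ncs_mul mulr_sumr; apply: eq_bigr => i _; rewrite /ncs_scale mulrA. Qed.
Lemma mul_scaler a (p q : ncs K) w : ncs_mul q (ncs_scale a p) w = a * ncs_mul q p w.
Proof. by rewrite /ncs_mul mulr_sumr; apply: eq_bigr => i _; rewrite /ncs_scale mulrCA. Qed.
Lemma mul_0l (q : ncs K) w : ncs_mul (ncs_zero K) q w = 0.
Proof. by rewrite /ncs_mul big1 // => i _; rewrite /ncs_zero mul0r. Qed.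
Lemma mul_0r (q : ncs K) w : ncs_mul q (ncs_zero K) w = 0.
Proof. by rewrite /ncs_mul big1 // => i _; rewrite /ncs_zero mulr0. Qed.

Lemma br_addl (p p' q : ncs K) : ncs_br (ncs_add p p') q = ncs_add (ncs_br p q) (ncs_br p' q).
Proof. apply: functional_extensionality => w; rewrite /ncs_br mul_addl mul_addr /ncs_add; ring. Qed.
Lemma br_addr (p p' q : ncs K) : ncs_br q (ncs_add p p') = ncs_add (ncs_br q p) (ncs_br q p').
Proof. apply: functional_extensionality => w; rewrite /ncs_br mul_addl mul_addr /ncs_add; ring. Qed.
Lemma br_scalel a (p q : ncs K) : ncs_br (ncs_scale a p) q = ncs_scale a (ncs_br p q).
Proof. apply: functional_extensionality => w; rewrite /ncs_br mul_scalel mul_scaler /ncs_scale; ring. Qed.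
Lemma br_scaler a (p q : ncs K) : ncs_br q (ncs_scale a p) = ncs_scale a (ncs_br q p).
Proof. apply: functional_extensionality => w; rewrite /ncs_br mul_scalel mul_scaler /ncs_scale; ring. Qed.
Lemma br_0l (q : ncs K) : ncs_br (ncs_zero K) q = ncs_zero K.
Proof. apply: functional_extensionality => w; rewrite /ncs_br mul_0l mul_0r /ncs_zero; ring. Qed.
Lemma br_0r (q : ncs K) : ncs_br q (ncs_zero K) = ncs_zero K.
Proof. apply: functional_extensionality => w; rewrite /ncs_br mul_0l mul_0r /ncs_zero; ring. Qed.

Inductive spanI (l : seq tm) : ncs K -> Prop :=
 | sp0 : spanI l (ncs_zero K)
 | spg i : (i < size l)%N -> spanI l (evalK (nth TX l i))
 | spadd p q : spanI l p -> spanI l q -> spanI l (ncs_add p q)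
 | spscale a p : spanI l p -> spanI l (ncs_scale a p).

Lemma span_br l1 l2 l3 p q :
  (forall a b, (a < size l1)%N -> (b < size l2)%N ->
     spanI l3 (evalK (TB (nth TX l1 a) (nth TX l2 b)))) ->
  spanI l1 p -> spanI l2 q -> spanI l3 (ncs_br p q).
Proof.
move=> H hp hq; elim: hp => [|a ha|p1 p2 _ ih1 _ ih2|c p1 _ ih].
- by rewrite br_0l; constructor.
- elim: hq => [|b hb|q1 q2 _ ih1 _ ih2|c q1 _ ih].
  + by rewrite br_0r; constructor.
  + exact: H.
  + by rewrite br_addr; constructor.
  + by rewrite br_scaler; constructor.
- by rewrite br_addl; constructor.
- by rewrite br_scalel; constructor.
Qed.

Definition lcKs (cs : seq int) (l : seq tm) : ncs K :=
  foldr (fun i acc => ncs_add (ncs_scale (nth 0 cs i)%:~R (evalK (nth TX l i))) acc)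
    (ncs_zero K) (iota 0 (size l)).

Lemma lcKs_span cs l : spanI l (lcKs cs l).
Proof.
rewrite /lcKs; have : all (fun i => i < size l)%N (iota 0 (size l)).
  by apply/allP => i; rewrite mem_iota.
elim: (iota 0 (size l)) => [|i s ih] /=; first by constructor.
by case/andP => hi hs; constructor; [constructor; constructor | exact: ih].
Qed.

Lemma lcKs_eq cs l w : lcKs cs l w = (lcZ cs l w)%:~R.
Proof.
rewrite /lcKs /lcZ; elim: (iota 0 (size l)) => [|i s ih] /=; first by [].
by rewrite /ncs_add /ncs_scale ih evalK_cZ intrD intrM.
Qed.

Lemma words_mem n w : size w = n -> w \in words n.
Proof.
elim: n w => [|n ih] [|b w] //= [hw].
have := ih _ hw => hm.
by case: b; rewrite /= !mem_cat ?(map_f _ hm) ?orbT.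
Qed.

Lemma Bn_deg n k : (1 <= n <= 6)%N -> (k < size (Bn n))%N -> deg (nth TX (Bn n) k) = n.
Proof.
move=> hn hk; have := degcheckP; rewrite /degcheck; move/allP => /(_ n).
rewrite mem_iota; move/(_ ltac:(lia)) => /= H.
by move/(all_nthP TX): H => /(_ k hk) /eqP.
Qed.

Lemma lcZ_homog cs n w : (1 <= n <= 6)%N -> size w != n -> lcZ cs (Bn n) w = 0.
Proof.
move=> hn hw; rewrite /lcZ.
have : all (fun i => i < size (Bn n))%N (iota 0 (size (Bn n))).
  by apply/allP => i; rewrite mem_iota.
elim: (iota 0 (size (Bn n))) => [|i s ih] //= /andP [hi hs].
by rewrite cZ_homog ?Bn_deg // mulr0 add0r ih.
Qed.

Lemma Bbr i j a b : (i + j <= 6)%N -> (a < size (Bn i))%N -> (b < size (Bn j))%N ->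
  spanI (Bn (i + j)) (evalK (TB (nth TX (Bn i) a) (nth TX (Bn j) b))).
Proof.
move=> hij ha hb.
have i0 : (0 < i)%N by case: i ha {hij}.
have j0 : (0 < j)%N by case: j hb {hij}.
have hi : i \in iota 1 5 by rewrite mem_iota; lia.
have hj : j \in iota 1 (6 - i) by rewrite mem_iota; lia.
have ha' : a \in iota 0 (size (Bn i)) by rewrite mem_iota; lia.
have hb' : b \in iota 0 (size (Bn j)) by rewrite mem_iota; lia.
have := brcheckP; rewrite /brcheck => /allP /(_ _ hi) /allP /(_ _ hj) /allP /(_ _ ha') /allP /(_ _ hb') /andP [_ hw].
suff -> : evalK (TB (nth TX (Bn i) a) (nth TX (Bn j) b)) = lcKs (brdat i j a b) (Bn (i + j)).
  exact: lcKs_span.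
apply: functional_extensionality => w.
rewrite evalK_cZ lcKs_eq; congr (_%:~R).
have [hs|hs] := eqVneq (size w) (i + j)%N.
  by move/allP: hw => /(_ w (words_mem hs)) /eqP.
rewrite cZ_homog; last by rewrite /= !Bn_deg //; lia.
by rewrite lcZ_homog //; lia.
Qed.

Definition piN (n : nat) (p : ncs K) : ncs K := fun w => if size w == n then p w else 0.

Lemma pi_add n p q : piN n (ncs_add p q) = ncs_add (piN n p) (piN n q).
Proof. by apply: functional_extensionality => w; rewrite /piN /ncs_add; case: ifP; rewrite ?addr0. Qed.
Lemma pi_scale n a p : piN n (ncs_scale a p) = ncs_scale a (piN n p).
Proof. by apply: functional_extensionality => w; rewrite /piN /ncs_scale; case: ifP; rewrite ?mulr0. Qed.

Lemma pi_mul n p q w : piN n (ncs_mul p q) w = \sum_(i < n.+1) ncs_mul (piN i p) (piN (n - i) q) w.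
Proof.
rewrite /ncs_mul exchange_big /=.
rewrite /piN; case: eqP => hw.
- apply: eq_bigr => [[k hk]] _ /=.
  rewrite size_takel ?size_drop; last by rewrite -ltnS.
  have hkn : (k < n.+1)%N by rewrite -hw.
  rewrite (bigD1 (Ordinal hkn)) //= eqxx hw eqxx big1 ?addr0 // => [[i hi]] /=.
  rewrite -val_eqE /= => hne; rewrite eq_sym (negbTE hne) mul0r //.
- symmetry; apply: big1 => [[k hk]] _ /=; apply: big1 => [[i hi]] _ /=.
  rewrite size_takel ?size_drop; last by rewrite -ltnS.
  case: eqP => [hki|]; last by rewrite mul0r.
  case: eqP => [h|]; last by rewrite mulr0.
  exfalso; apply: hw; lia.
Qed.

Lemma pi_br n p q : piN n (ncs_br p q) = fun w => \sum_(i < n.+1) ncs_br (piN i p) (piN (n - i) q) w.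
Proof.
apply: functional_extensionality => w.
have -> : piN n (ncs_br p q) w = piN n (ncs_mul p q) w - piN n (ncs_mul q p) w.
  by rewrite /piN /ncs_br; case: ifP; rewrite ?subr0.
rewrite !pi_mul /ncs_br sumrB; congr (_ - _).
rewrite [RHS](reindex_inj rev_ord_inj) /=; apply: eq_bigr => [[i hi]] _ /=.
by rewrite subSS subKn // -ltnS.
Qed.

Lemma span_sum l m (F : nat -> ncs K) : (forall i, (i < m)%N -> spanI l (F i)) ->
  spanI l (fun w => \sum_(i < m) F i w).
Proof.
elim: m => [|m ih] H.
  have -> : (fun w => \sum_(i < 0) F i w) = ncs_zero K.
    by apply: functional_extensionality => w; rewrite big_ord0.
  by constructor.
have -> : (fun w => \sum_(i < m.+1) F i w) = ncs_add (fun w => \sum_(i < m) F i w) (F m).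
  by apply: functional_extensionality => w; rewrite big_ord_recr.
constructor; last exact: H.
by apply: ih => i hi; apply: H; lia.
Qed.

Lemma free_span p : free_lie p -> forall n, (n <= 6)%N -> spanI (Bn n) (piN n p).
Proof.
elim => {p} [p hp|p q _ ihp _ ihq|a p _ ih|p q _ ihp _ ihq] n hn.
- have [->|hn1] := eqVneq n 1%N.
    case: hp => ->.
    + have -> : piN 1 (ncs_x K) = evalK (nth TX (Bn 1) 0).
        apply: functional_extensionality => w; rewrite /piN /= /ncs_x.
        case: ifP => // /negbT h; case: eqP => // hw; by rewrite hw in h.
      by constructor.
    + have -> : piN 1 (ncs_y K) = evalK (nth TX (Bn 1) 1).
        apply: functional_extensionality => w; rewrite /piN /= /ncs_y.
        case: ifP => // /negbT h; case: eqP => // hw; by rewrite hw in h.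
      by constructor.
  have -> : piN n p = ncs_zero K.
    apply: functional_extensionality => w; rewrite /piN /ncs_zero.
    case: eqP => // hw; case: hp => -> ; rewrite /ncs_x /ncs_y; case: eqP => // hw';
      by rewrite hw' in hw; move: hn1; rewrite -hw.
  by constructor.
- by rewrite pi_add; constructor; [apply: ihp | apply: ihq].
- by rewrite pi_scale; constructor; apply: ih.
- rewrite pi_br; apply: (span_sum (F := fun i => ncs_br (piN i p) (piN (n - i) q))) => i hi.
  have hpi : spanI (Bn i) (piN i p) by apply: ihp; lia.
  have hqi : spanI (Bn (n - i)) (piN (n - i) q) by apply: ihq; lia.
  apply: (span_br _ hpi hqi).
  move=> a b ha hb; have := Bbr (i:=i) (j:=n-i) _ ha hb.
  by rewrite subnKC; [apply | lia].
Qed.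
End Th.

Section Der.
Variable K : fieldType.
Variable delta : ncs K -> ncs K.
Hypothesis hder : lie_derivation delta.
Hypothesis hdx : delta (ncs_x K) = ncs_zero K.
Hypothesis hdy : delta (ncs_y K) = ncs_x K.

Lemma zero_scale : ncs_zero K = ncs_scale 0 (ncs_x K).
Proof. by apply: functional_extensionality => w; rewrite /ncs_scale mul0r. Qed.

Lemma free_zero : free_lie (ncs_zero K).
Proof. by rewrite zero_scale; apply: lc_scale; apply: lc_gen; left. Qed.

Lemma free_evalK t : free_lie (evalK K t).
Proof. elim: t => [||a iha b ihb] /=; [by apply: lc_gen; left | by apply: lc_gen; right | exact: lc_br]. Qed.

Lemma span_free l (p : ncs K) : spanI l p -> free_lie p.
Proof.
elim => [|i _|p1 p2 _ h1 _ h2|a p1 _ h]; [exact: free_zero | exact: free_evalK | exact: lc_add | exact: lc_scale].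
Qed.

Lemma delta_zero : delta (ncs_zero K) = ncs_zero K.
Proof.
rewrite zero_scale (proj1 (proj2 hder)); last by apply: lc_gen; left.
by rewrite hdx -zero_scale; apply: functional_extensionality => w; rewrite /ncs_scale /ncs_zero mul0r.
Qed.

Definition lcp (ps : seq (int * tm)) : ncs K :=
  foldr (fun p acc => ncs_add (ncs_scale p.1%:~R (evalK K p.2)) acc) (ncs_zero K) ps.

Lemma lcp_eq ps w : lcp ps w = (lpZ ps w)%:~R.
Proof.
elim: ps => [|p ps ih] //=.
by rewrite /ncs_add /ncs_scale ih evalK_cZ intrD intrM.
Qed.

Lemma lcp_cat s1 s2 : lcp (s1 ++ s2) = ncs_add (lcp s1) (lcp s2).
Proof.
elim: s1 => [|p s ih] /=.
  by apply: functional_extensionality => w; rewrite /ncs_add /ncs_zero add0r.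
by rewrite ih; apply: functional_extensionality => w; rewrite /ncs_add addrA.
Qed.

Lemma br_lcp_l ps b : ncs_br (lcp ps) (evalK K b) = lcp [seq (p.1, TB p.2 b) | p <- ps].
Proof.
elim: ps => [|p ps ih] /=; first by rewrite br_0l.
by rewrite br_addl br_scalel ih.
Qed.

Lemma br_lcp_r ps a : ncs_br (evalK K a) (lcp ps) = lcp [seq (p.1, TB a p.2) | p <- ps].
Proof.
elim: ps => [|p ps ih] /=; first by rewrite br_0r.
by rewrite br_addr br_scaler ih.
Qed.

Lemma delta_evalK t : delta (evalK K t) = lcp (dT t).
Proof.
elim: t => [||a iha b ihb] /=.
- by rewrite hdx.
- rewrite hdy; apply: functional_extensionality => w.
  by rewrite /ncs_add /ncs_scale /ncs_zero mul1r addr0.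
- rewrite (proj2 (proj2 hder) _ _ (free_evalK a) (free_evalK b)) iha ihb.
  by rewrite br_lcp_l br_lcp_r lcp_cat.
Qed.

Definition lcK (c : nat -> K) l : ncs K :=
  fun w => \sum_(i < size l) c i * evalK K (nth TX l i) w.
Definition lcD (c : nat -> K) l : ncs K :=
  fun w => \sum_(i < size l) c i * delta (evalK K (nth TX l i)) w.

Lemma span_coef l (p : ncs K) : spanI l p -> exists c, p = lcK c l /\ delta p = lcD c l.
Proof.
elim => [|i hi|p1 p2 h1 [c1 [e1 d1]] h2 [c2 [e2 d2]]|a p1 h1 [c1 [e1 d1]]].
- exists (fun _ => 0); rewrite delta_zero; split; apply: functional_extensionality => w;
    by rewrite /lcK /lcD /ncs_zero big1 // => j _; rewrite mul0r.
- exists (fun j => (j == i)%:R); split; apply: functional_extensionality => w;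
    rewrite /lcK /lcD (bigD1 (Ordinal hi)) //= eqxx mul1r big1 ?addr0 // => j hj;
    by rewrite (negbTE (_ : (nat_of_ord j) != i)) ?mul0r // -[i]/(nat_of_ord (Ordinal hi)) val_eqE.
- exists (fun j => c1 j + c2 j); split.
    rewrite e1 e2; apply: functional_extensionality => w.
    by rewrite /ncs_add /lcK -big_split; apply: eq_bigr => j _; rewrite mulrDl.
  rewrite (proj1 hder _ _ (span_free h1) (span_free h2)) d1 d2.
  apply: functional_extensionality => w.
  by rewrite /ncs_add /lcD -big_split; apply: eq_bigr => j _; rewrite mulrDl.
- exists (fun j => a * c1 j); split.
    rewrite e1; apply: functional_extensionality => w.
    by rewrite /ncs_scale /lcK mulr_sumr; apply: eq_bigr => j _; rewrite mulrA.
  rewrite (proj1 (proj2 hder) a _ (span_free h1)) d1.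
  apply: functional_extensionality => w.
  by rewrite /ncs_scale /lcD mulr_sumr; apply: eq_bigr => j _; rewrite mulrA.
Qed.
End Der.

Lemma intr_neq0 (K : fieldType) (charK0 : [pchar K]%R =i pred0) (N : int) :
  N != 0 -> (N%:~R : K) != 0.
Proof.
have hc := (pcharf0P K).1 charK0.
case: N => n hn.
- change ((n%:R : K) != 0); rewrite hc; by apply: contra hn => /eqP ->.
- change ((- (n.+1)%:R : K) != 0); by rewrite oppr_eq0 hc.
Qed.

Lemma lin_elim (K : fieldType) (charK0 : [pchar K]%R =i pred0) (c : nat -> K)
  (M : nat -> nat -> int) (lam : seq int) (N : int) k :
  N != 0 -> (forall e, (e < 6)%N -> \sum_(i < 9) c i * (M e i)%:~R = 0) ->
  (forall i, (i < 9)%N -> N * (i == k)%:R = \sum_(e < 6) nth 0 lam e * M e i) ->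
  (k < 9)%N -> c k = 0.
Proof.
move=> hN hM hl hk.
have h1 : (N%:~R : K) * c k = \sum_(i < 9) c i * (N * (nat_of_ord i == k)%:R)%:~R.
  rewrite (bigD1 (Ordinal hk)) //= eqxx mulr1.
  rewrite big1 ?addr0; first by rewrite mulrC.
  move=> i hi.
  rewrite (negbTE (_ : (nat_of_ord i) != k)) ?mulr0 ?mulr0 //.
have h2 : \sum_(i < 9) c i * (N * (nat_of_ord i == k)%:R)%:~R = 0.
  under eq_bigr => i _ do rewrite hl // intr_sum mulr_sumr.
  rewrite exchange_big /= big1 // => e _.
  under eq_bigr => i _ do rewrite intrM mulrCA.
  by rewrite -mulr_sumr hM // mulr0.
move: h1; rewrite h2 => /eqP; rewrite mulf_eq0 (negbTE (intr_neq0 charK0 hN)) /=.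
by move/eqP.
Qed.

Theorem proposition5p4 (K : fieldType) (charK0 : [pchar K]%R =i pred0)
  (delta : ncs K -> ncs K)
  (hder : lie_derivation delta)
  (hdx : delta (ncs_x K) = ncs_zero K) (hdy : delta (ncs_y K) = ncs_x K)
  (f : ncs K) (hfL : free_lie f) (hdeg : homog 6 f)
  (hker : delta f = ncs_zero K) :
  let x := ncs_x K in
  let y := ncs_y K in
  let yx := ncs_br y x in
  lie_closure
    (fun p => p = x \/ p = yx \/ p = ncs_br (ncs_br yx y) (ncs_br yx x)) f.
Proof.
move=> x y yx.
have hf6 : f = piN 6 f.
  apply: functional_extensionality => w; rewrite /piN.
  by case: eqP => // /eqP h; rewrite hdeg.
have hs : spanI (Bn 6) f by rewrite hf6; apply: free_span.
have [c [hfc hdc]] := span_coef hder hdx hs.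
have eqs : forall e, (e < 6)%N -> \sum_(i < 9) c i * (Mrow e i)%:~R = 0.
  move=> e he.
  have h0 : lcD delta c (Bn 6) (nth [::] chosenw e) = 0 by rewrite -hdc hker.
  rewrite /lcD in h0.
  change (\sum_(i < 9) c i * delta (evalK K (nth TX (Bn 6) i)) (nth [::] chosenw e) = 0) in h0.
  rewrite -[RHS]h0; apply: eq_bigr => i _.
  by rewrite (delta_evalK hder hdx hdy) lcp_eq.
have ck : forall k, (3 <= k < 9)%N -> c k = 0.
  move=> k hk.
  have hk' : k \in iota 3 6 by rewrite mem_iota; lia.
  have := lamcheckP; rewrite /lamcheck => /allP /(_ k hk').
  case: (nth (0, [::]) lamtab (k - 3)) => N lam /andP [/andP [hN _] /allP hall].
  apply: (lin_elim charK0 (M := Mrow) (lam := lam) hN eqs); last by lia.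
  move=> i hi.
  have hi' : i \in iota 0 9 by rewrite mem_iota; lia.
  by have := hall i hi'; rewrite isumE => /eqP.
have hfeq : f = ncs_add (ncs_scale (c 0%N) (evalK K (nth TX (Bn 6) 0)))
   (ncs_add (ncs_scale (c 1%N) (evalK K (nth TX (Bn 6) 1)))
            (ncs_scale (c 2%N) (evalK K (nth TX (Bn 6) 2)))).
  rewrite hfc; apply: functional_extensionality => w.
  rewrite /lcK /ncs_add /ncs_scale.
  change (\sum_(i < 9) c i * evalK K (nth TX (Bn 6) i) w = 
    c 0%N * evalK K (nth TX (Bn 6) 0) w + (c 1%N * evalK K (nth TX (Bn 6) 1) w + c 2%N * evalK K (nth TX (Bn 6) 2) w)).
  rewrite 3!big_ord_recl big1 ?addr0 //.
  move=> i _; rewrite ck ?mul0r //.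
  case: i => i hi /=; rewrite /bump /=; lia.
rewrite hfeq.
apply: lc_add; first apply: lc_scale.
  by repeat first [apply: lc_gen; by left | apply: lc_gen; by right; left | apply: lc_br].
apply: lc_add; apply: lc_scale.
  by repeat first [apply: lc_gen; by left | apply: lc_gen; by right; left | apply: lc_br].
by apply: lc_gen; right; right.
Qed.
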